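(* Let $(X,\Psi)$ be a $\sigma$-totally bounded uniform space and $Y\subseteq X$. The following are equivalent: (1) $(X,\Psi)$ satisfies $\textsf{S}_1(\mathcal{O}_\Psi,\mathcal{O}_Y)$; (2) ONE has no winning strategy in the game ${\sf G}_1(\mathcal{O}_\Psi,\mathcal{O}_Y)$.
   Context: A uniformity on $X$ is a filter $\Psi$ on $X\times X$ whose members contain the diagonal $\Delta_X$, closed under $U\mapsto U^{-1}=\{(y,x):(x,y)\in U\}$, such that for each $U\in\Psi$ there is $V\in\Psi$ with $V\circ V\subseteq U$, and with $\bigcap\Psi=\Delta_X$. For $U\in\Psi$, $U(x)=\{y:(x,y)\in U\}$, and $X$ carries the topology in which $\{U(x):U\in\Psi\}$ is a neighbourhood base at $x$. A subset $K$ is totally bounded if for each $U\in\Psi$ there is a finite $F\subseteq X$ with $K\subseteq\bigcup_{x\in F}U(x)$; $X$ is $\sigma$-totally bounded if it is a countable union of totally bounded subsets. For $N\in\Psi$, $\mathcal{O}(N)=\{\mathrm{Int}(N(x)):x\in X\}$, and $\mathcal{O}_\Psi=\{\mathcal{O}(N):N\in\Psi\}$. $\mathcal{O}_Y$ is the set of families of open subsets of $X$ whose union contains $Y$. $\textsf{S}_1(\mathcal{A},\mathcal{B})$: for every sequence $(O_n)$ of elements of $\mathcal{A}$ there are $T_n\in O_n$ with $\{T_n:n\in\mathbb{N}\}\in\mathcal{B}$. Game ${\sf G}_1(\mathcal{A},\mathcal{B})$: in inning $n$ ONE chooses $O_n\in\mathcal{A}$, TWO responds with $T_n\in O_n$;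 TWO wins if $\{T_n:n\in\mathbb{N}\}\in\mathcal{B}$, else ONE wins. *)

(* Defs.v *)
From Stdlib Require Import List.

Definition rel (X : Type) := X -> X -> Prop.

Definition section {X : Type} (U : rel X) (x : X) : X -> Prop := fun y => U x y.

Definition rel_inv {X : Type} (U : rel X) : rel X := fun x y => U y x.
Definition rel_comp {X : Type} (V W : rel X) : rel X :=
  fun x z => exists y, V x y /\ W y z.
Definition rel_sub {X : Type} (U V : rel X) : Prop := forall x y, U x y -> V x y.

Record uniformity (X : Type) (Psi : rel X -> Prop) : Prop := {
  unif_full : Psi (fun _ _ => True);
  unif_up : forall U V, Psi U -> rel_sub U V -> Psi V;
  unif_cap : forall U V, Psi U -> Psi V -> Psi (fun x y => U x y /\ V x y);
  unif_diag : forall U, Psi U -> forall x, U x x;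
  unif_inv : forall U, Psi U -> Psi (rel_inv U);
  unif_half : forall U, Psi U -> exists V, Psi V /\ rel_sub (rel_comp V V) U;
  unif_sep : forall x y, (forall U, Psi U -> U x y) -> x = y
}.

Definition uopen {X : Type} (Psi : rel X -> Prop) (O : X -> Prop) : Prop :=
  forall x, O x -> exists U, Psi U /\ forall y, U x y -> O y.

Definition interior {X : Type} (Psi : rel X -> Prop) (A : X -> Prop) : X -> Prop :=
  fun x => exists O, uopen Psi O /\ (forall y, O y -> A y) /\ O x.

Definition totally_bounded {X : Type} (Psi : rel X -> Prop) (K : X -> Prop) : Prop :=
  forall U, Psi U -> exists F : list X,
    forall k, K k -> exists x, In x F /\ U x k.

Definition sigma_totally_bounded {X : Type} (Psi : rel X -> Prop) : Prop :=
  exists K : nat -> (X -> Prop),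
    (forall n, totally_bounded Psi (K n)) /\
    (forall x, exists n, K n x).

Definition family (X : Type) := (X -> Prop) -> Prop.

Definition cover_of {X : Type} (Psi : rel X -> Prop) (N : rel X) : family X :=
  fun A => exists x, A = interior Psi (section N x).

Definition O_Psi {X : Type} (Psi : rel X -> Prop) : family X -> Prop :=
  fun F => exists N, Psi N /\ F = cover_of Psi N.

Definition O_Y {X : Type} (Psi : rel X -> Prop) (Y : X -> Prop) : family X -> Prop :=
  fun F => (forall A, F A -> uopen Psi A) /\
           (forall y, Y y -> exists A, F A /\ A y).

Definition range_fam {X : Type} (T : nat -> (X -> Prop)) : family X :=
  fun A => exists n, A = T n.

Definition S1 {X : Type} (A B : family X -> Prop) : Prop :=
  forall O : nat -> family X, (forall n, A (O n)) ->
    exists T : nat -> (X -> Prop), (forall n, O n (T n)) /\ B (range_fam T).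

(* Game G_1(A, B).  A strategy of ONE maps the finite sequence of TWO's
   previous moves to ONE's next move (an element of A). *)
Definition prefix {X : Type} (T : nat -> (X -> Prop)) (n : nat) : list (X -> Prop) :=
  map T (seq 0 n).

Definition ONE_strategy {X : Type} (A : family X -> Prop)
  (sigma : list (X -> Prop) -> family X) : Prop :=
  forall h, A (sigma h).

Definition ONE_winning {X : Type} (A B : family X -> Prop)
  (sigma : list (X -> Prop) -> family X) : Prop :=
  ONE_strategy A sigma /\
  forall T : nat -> (X -> Prop),
    (forall n, sigma (prefix T n) (T n)) -> ~ B (range_fam T).

Definition ONE_has_no_winning_strategy {X : Type} (A B : family X -> Prop) : Prop :=
  ~ exists sigma, ONE_winning A B sigma.

(* Main.v *)
Require Import Defs.
From Stdlib Require Import List Arith Lia Cantor Classical ClassicalEpsilon.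
Import ListNotations.

Lemma choice_fun {A B : Type} (P : A -> B -> Prop) :
  (forall a, exists b, P a b) -> exists f : A -> B, forall a, P a (f a).
Proof.
  intros H. exists (fun a => proj1_sig (constructive_indefinite_description _ (H a))).
  intro a. exact (proj2_sig (constructive_indefinite_description _ (H a))).
Qed.

Lemma interior_mono {X : Type} (Psi : rel X -> Prop) (A B : X -> Prop) x :
  (forall y, A y -> B y) -> interior Psi A x -> interior Psi B x.
Proof.
  intros HAB [O [HO [HOA Ox]]]. exists O. repeat split; auto.
Qed.

Lemma interior_sub {X : Type} (Psi : rel X -> Prop) (A : X -> Prop) x :
  interior Psi A x -> A x.
Proof. intros [O [HO [HOA Ox]]]. auto. Qed.

Lemma interior_open {X : Type} (Psi : rel X -> Prop) (A : X -> Prop) :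
  uopen Psi (interior Psi A).
Proof.
  intros x [O [HO [HOA Ox]]]. destruct (HO x Ox) as [U [HU HUO]].
  exists U. split; auto. intros y Uy. exists O. repeat split; auto.
Qed.

Lemma prefix_length {X : Type} (T : nat -> (X -> Prop)) n : length (prefix T n) = n.
Proof. unfold prefix. rewrite length_map, length_seq. reflexivity. Qed.

Definition capl {X : Type} (U : list (X -> Prop) -> rel X) (l : list (list (X -> Prop))) : rel X :=
  fold_right (fun h acc => fun a b => U h a b /\ acc a b) (fun _ _ => True) l.

Lemma capl_psi {X : Type} (Psi : rel X -> Prop) U l :
  uniformity X Psi -> (forall h, Psi (U h)) -> Psi (capl U l).
Proof.
  intros HU HPs. induction l as [|h l IH]; simpl.
  - apply (unif_full _ _ HU).
  - apply (unif_cap _ _ HU); auto.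
Qed.

Lemma capl_in {X : Type} (U : list (X -> Prop) -> rel X) l h a b :
  In h l -> capl U l a b -> U h a b.
Proof.
  induction l as [|h' l IH]; simpl; [tauto|].
  intros [<-|Hin] [H1 H2]; auto.
Qed.

Fixpoint htree {X : Type} (Psi : rel X -> Prop) (N : list (X -> Prop) -> rel X)
  (F : list (X -> Prop) * nat -> list X) (x0 : X) (n : nat) : list (list (X -> Prop)) :=
  match n with
  | 0 => [nil]
  | S n' => flat_map (fun h => map (fun x => h ++ [interior Psi (section (N h) x)])
              (x0 :: flat_map (fun m => F (h, m)) (seq 0 (S n')))) (htree Psi N F x0 n')
  end.

Fixpoint hist {X : Type} (resp : nat -> list (X -> Prop) -> (X -> Prop)) (n : nat) : list (X -> Prop) :=
  match n with
  | 0 => nil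
  | S n' => hist resp n' ++ [resp n' (hist resp n')]
  end.

Lemma prefix_hist {X : Type} (resp : nat -> list (X -> Prop) -> (X -> Prop)) n :
  prefix (fun k => resp k (hist resp k)) n = hist resp n.
Proof.
  induction n as [|n IH]; [reflexivity|].
  unfold prefix in *. rewrite seq_S, map_app, IH. simpl. reflexivity.
Qed.

Theorem theorem2p3 (X : Type) (Psi : rel X -> Prop) (Y : X -> Prop) :
  uniformity X Psi ->
  sigma_totally_bounded Psi ->
  (S1 (O_Psi Psi) (O_Y Psi Y) <-> ONE_has_no_winning_strategy (O_Psi Psi) (O_Y Psi Y)).
Proof.
  intros HU [K [HK Hcov]]. split.
  2:{ intros Hno O HO. apply NNPP. intro Hn. apply Hno.
      exists (fun h => O (length h)). split.
      - intro h. apply HO.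
      - intros T HT HB. apply Hn. exists T. split; auto.
        intro n. specialize (HT n). rewrite prefix_length in HT. exact HT. }
  intros HS1 [sigma [Hstrat Hwin]].
  destruct (HS1 (fun _ => cover_of Psi (fun _ _ => True))) as [T0 [HT0 _]].
  { intro n. exists (fun _ _ => True). split; auto. apply (unif_full _ _ HU). }
  destruct (HT0 0) as [x0 _].
  destruct (choice_fun (fun h N => Psi N /\ sigma h = cover_of Psi N)) as [N HN].
  { intro h. destruct (Hstrat h) as [N' [HN1 HN2]]. eauto. }
  destruct (choice_fun (fun h V => Psi V /\ rel_sub (rel_comp V V) (N h))) as [V HV].
  { intro h. apply (unif_half _ _ HU). apply HN. }
  destruct (choice_fun (fun h U => Psi U /\ rel_sub (rel_comp U U) (V h))) as [U' HU'].
  { intro h. apply (unif_half _ _ HU). apply HV. }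
  destruct (choice_fun (fun (p : list (X -> Prop) * nat) L =>
              forall k, K (snd p) k -> exists x, In x L /\ V (fst p) x k)) as [F HF].
  { intros [h m]. apply (HK m). apply HV. }
  set (Us := fun h => fun a b => U' h a b /\ U' h b a).
  set (W := fun n => capl Us (htree Psi N F x0 n)).
  assert (HW : forall n, Psi (W n)).
  { intro n. apply capl_psi; auto. intro h. apply (unif_cap _ _ HU). apply HU'.
    apply (unif_inv _ _ HU). apply HU'. }
  destruct (choice_fun (fun m Tm =>
     (forall j, cover_of Psi (W (to_nat (m, j))) (Tm j)) /\ O_Y Psi Y (range_fam Tm)))
    as [sel Hsel].
  { intro m. apply (HS1 (fun j => cover_of Psi (W (to_nat (m, j))))). intro j. exists (W (to_nat (m, j))). split; auto. }
  destruct (choice_fun (fun (p : nat * nat) z =>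
      sel (fst p) (snd p) = interior Psi (section (W (to_nat p)) z))) as [zz Hzz].
  { intros [m j]. destruct (proj1 (Hsel m) j) as [z Hz]. exists z. exact Hz. }
  set (z := fun n => zz (of_nat n)).
  destruct (choice_fun (fun (p : nat * list (X -> Prop)) x =>
      (x = x0 \/ exists m, m <= fst p /\ In x (F (snd p, m))) /\
      (In (snd p) (htree Psi N F x0 (fst p)) ->
       (exists m q, m <= fst p /\ W (fst p) (z (fst p)) q /\ K m q) ->
       forall w, W (fst p) (z (fst p)) w -> N (snd p) x w))) as [pick Hpick].
  { intros [n h]; simpl.
    destruct (classic (In h (htree Psi N F x0 n) /\
                       exists m q, m <= n /\ W n (z n) q /\ K m q)) as [[Hin [m [q [Hm [Hq Kq]]]]]|Hc].
    - destruct (HF (h, m) q Kq) as [x [Hx Vx]]. simpl in Vx.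
      exists x. split; [right; eauto|]. intros _ _ w Hw.
      apply (proj2 (HV h)). exists q. split; auto.
      apply (proj2 (HU' h)). exists (z n). split.
      + exact (proj2 (capl_in Us _ h _ _ Hin Hq)).
      + exact (proj1 (capl_in Us _ h _ _ Hin Hw)).
    - exists x0. split; auto. intros Hin Hex. exfalso; auto. }
  set (resp := fun n h => interior Psi (section (N h) (pick (n, h)))).
  set (T := fun k => resp k (hist resp k)).
  assert (Hhin : forall n, In (hist resp n) (htree Psi N F x0 n)).
  { induction n as [|n IH]; [simpl; auto|].
    change (In (hist resp n ++ [resp n (hist resp n)])
      (flat_map (fun h => map (fun x => h ++ [interior Psi (section (N h) x)])
              (x0 :: flat_map (fun m => F (h, m)) (seq 0 (S n)))) (htree Psi N F x0 n))).
    apply in_flat_map. exists (hist resp n). split; auto.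
    apply in_map_iff. exists (pick (n, hist resp n)). split; [reflexivity|].
    destruct (proj1 (Hpick (n, hist resp n))) as [E|[m [Hm Hx]]]; cbn [fst snd] in *.
    - left; auto.
    - right. apply in_flat_map. exists m. split; auto. apply in_seq. lia. }
  apply (Hwin T).
  - intro n. unfold T. rewrite prefix_hist. rewrite (proj2 (HN _)).
    exists (pick (n, hist resp n)). reflexivity.
  - split.
    + intros A [n ->]. apply interior_open.
    + intros y Yy. destruct (Hcov y) as [m Km].
      destruct (proj2 (proj2 (Hsel m)) y Yy) as [A [[j ->] Ay]].
      rewrite (Hzz (m, j) : sel m j = _) in Ay. simpl in Ay.
      set (n := to_nat (m, j)) in *.
      assert (Hzn : z n = zz (m, j)) by (unfold z, n; rewrite cancel_of_to; reflexivity).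
      rewrite <- Hzn in Ay.
      assert (Hmn : m <= n) by (pose proof (to_nat_non_decreasing m j); unfold n; lia).
      exists (T n). split; [exists n; reflexivity|].
      unfold T, resp. eapply interior_mono; [|exact Ay].
      intros w Hw. apply (proj2 (Hpick (n, hist resp n))); simpl; auto.
      exists m, y. repeat split; auto. exact (interior_sub _ _ _ Ay).
Qed.
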